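(* We have $[A,x]=[A,A]=x^NA$, where $[A,x]=\{ax-xa:a\in A\}$ and $[A,A]$ is the span of all commutators.
   Context: Let $\Bbbk$ be a field of characteristic zero and $N\geq1$ an integer. Let $A=A_N$ be the $\Bbbk$-algebra generated by $x,y$ subject to the relation $yx-xy=x^N$. *)

(* Defs.v *)
From HB Require Import structures.
From mathcomp Require Import all_boot all_order all_algebra.
Set Implicit Arguments. Unset Strict Implicit. Unset Printing Implicit Defensive.
Import GRing.Theory.
Local Open Scope ring_scope.

(* The algebra A_N = k<x,y>/(yx - xy - x^N) is given by its presentation:
   a k-algebra A with two elements x, y such that
   (1) the defining relation holds,
   (2) A is generated (as a k-algebra) by x and y, i.e. every element is a
       k-linear combination of words in x and y,
   (3) universal property: for every k-algebra B and elements bx, by of B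
       satisfying the same relation there is a k-algebra morphism A -> B
       sending x to bx and y to by.
   These determine (A, x, y) up to unique isomorphism. *)

Definition gen_word (F : fieldType) (A : algType F) (x y : A) (w : seq bool) : A :=
  \prod_(b <- w) (if b then y else x).

Definition is_presented_AN (F : fieldType) (N : nat) (A : algType F) (x y : A) : Prop :=
  [/\ y * x - x * y = x ^+ N,
      (forall a : A, exists s : seq (F * seq bool),
          a = \sum_(p <- s) p.1 *: gen_word x y p.2)
    & (forall (B : algType F) (bx by' : B), by' * bx - bx * by' = bx ^+ N ->
          exists f : {lrmorphism A -> B}, f x = bx /\ f y = by')].

Definition comm_with (F : fieldType) (A : algType F) (x : A) : A -> Prop :=
  fun v => exists a : A, v = a * x - x * a.

(* [A, A] = k-span of all commutators (finite sums suffice, commutators being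
   closed under scaling) *)
Definition comm_span (F : fieldType) (A : algType F) : A -> Prop :=
  fun v => exists s : seq (A * A), v = \sum_(p <- s) (p.1 * p.2 - p.2 * p.1).

Definition left_mul_set (F : fieldType) (A : algType F) (u : A) : A -> Prop :=
  fun v => exists a : A, v = u * a.

(* Main.v *)
Require Import Defs.
From HB Require Import structures.
From mathcomp Require Import all_boot all_order all_algebra.
Local Open Scope ring_scope.
Import GRing.Theory.
Set Implicit Arguments. Unset Strict Implicit.

Definition subsp (F : fieldType) (A : lmodType F) (P : A -> Prop) :=
  [/\ P 0, (forall u v, P u -> P v -> P (u + v)) & (forall (c : F) u, P u -> P (c *: u))].

Definition spanP (F : fieldType) (A : lmodType F) (G : A -> Prop) (v : A) :=
  forall P, subsp P -> (forall g, G g -> P g) -> P v.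

Lemma subsp_opp (F : fieldType) (A : lmodType F) (P : A -> Prop) u :
  subsp P -> P u -> P (- u).
Proof. by case=> _ _ hZ hu; rewrite -scaleN1r; apply: hZ. Qed.

Lemma subsp_sub (F : fieldType) (A : lmodType F) (P : A -> Prop) u v :
  subsp P -> P u -> P v -> P (u - v).
Proof. move=> hP hu hv; case: (hP) => _ hD _; apply: hD => //; exact: subsp_opp. Qed.

Lemma subsp_muln (F : fieldType) (A : lmodType F) (P : A -> Prop) u n :
  subsp P -> P u -> P (u *+ n).
Proof. by case=> _ _ hZ hu; rewrite -scaler_nat; apply: hZ. Qed.

Lemma spanP_sub (F : fieldType) (A : lmodType F) (G : A -> Prop) : subsp (spanP G).
Proof.
split.
- by move=> P [] .
- by move=> u v hu hv P hP hG; case: (hP) => _ hD _; apply: hD; [apply: hu|apply: hv].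
- by move=> c u hu P hP hG; case: (hP) => _ _ hZ; apply: hZ; apply: hu.
Qed.

Lemma spanP_gen (F : fieldType) (A : lmodType F) (G : A -> Prop) g : G g -> spanP G g.
Proof. by move=> hg P _ hG; apply: hG. Qed.


Lemma spanB (F : fieldType) (A : lmodType F) (G : A -> Prop) u v :
  spanP G u -> spanP G v -> spanP G (u - v).
Proof. by apply: subsp_sub; exact: spanP_sub. Qed.

Lemma spanMn (F : fieldType) (A : lmodType F) (G : A -> Prop) u n :
  spanP G u -> spanP G (u *+ n).
Proof. by apply: subsp_muln; exact: spanP_sub. Qed.

Lemma spanD (F : fieldType) (A : lmodType F) (G : A -> Prop) u v :
  spanP G u -> spanP G v -> spanP G (u + v).
Proof. by case: (spanP_sub G) => _ hD _; apply: hD. Qed.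

Lemma span0 (F : fieldType) (A : lmodType F) (G : A -> Prop) : spanP G 0.
Proof. by case: (spanP_sub G). Qed.

Lemma all_words (F : fieldType) (A : algType F) (x y : A) (P : A -> Prop) :
  subsp P -> (forall a : A, exists s : seq (F * seq bool),
          a = \sum_(p <- s) p.1 *: gen_word x y p.2) ->
  (forall w, P (gen_word x y w)) -> forall a, P a.
Proof.
move=> [h0 hD hZ] gen hw a; have [s ->] := gen a.
elim: s => [|p s IH]; first by rewrite big_nil.
by rewrite big_cons; apply: hD => //; apply: hZ.
Qed.

Lemma gen_word_cons (F : fieldType) (A : algType F) (x y : A) b w :
  gen_word x y (b :: w) = (if b then y else x) * gen_word x y w.
Proof. by rewrite /gen_word big_cons. Qed.

Lemma gen_word_nil (F : fieldType) (A : algType F) (x y : A) :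
  gen_word x y [::] = 1.
Proof. by rewrite /gen_word big_nil. Qed.

Lemma natF_neq0 (F : fieldType) (n:nat) : [pchar F] =i pred0 -> (n.+1%:R : F) != 0.
Proof. move=> h. rewrite natf_neq0_pchar. apply/pnatP => // p pp _. rewrite !inE. have:= h p. rewrite inE /=. move=> ->. done. Qed.

Lemma xn_y (F : fieldType) (M : nat) (A : algType F) (x y : A) :
  y * x - x * y = x ^+ M.+1 ->
  forall n, x ^+ n * y = y * x ^+ n - x ^+ (n + M) *+ n.
Proof.
move=> rel; elim=> [|n IH]; first by rewrite !expr0 mulr1 mul1r mulr0n subr0.
rewrite exprS -mulrA IH mulrBr (mulrA x y).
have -> : x * y = y * x - x ^+ M.+1 by rewrite -rel opprB addrC subrK.
by rewrite mulrBl -mulrA -exprS -exprD mulrnAr -exprS mulrSr addSn opprD addrA addrAC addSn (addnC M n).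



Qed.


Lemma subsp_comp (F : fieldType) (A : lmodType F) (P : A -> Prop) (f : A -> A) :
  subsp P -> f 0 = 0 -> (forall u v, f (u + v) = f u + f v) ->
  (forall c u, f (c *: u) = c *: f u) -> subsp (fun v => P (f v)).
Proof.
move=> [h0 hD hZ] f0 fD fZ; split; first by rewrite f0.
- by move=> u v hu hv; rewrite fD; apply: hD.
- by move=> c u hu; rewrite fZ; apply: hZ.
Qed.

Lemma subsp_mulr (F : fieldType) (A : algType F) (P : A -> Prop) (c : A) :
  subsp P -> subsp (fun v => P (v * c)).
Proof.
move=> hP; apply: subsp_comp => //; [exact: mul0r|by move=> ? ?; rewrite mulrDl|].
by move=> a u; rewrite scalerAl.
Qed.

Lemma subsp_mull (F : fieldType) (A : algType F) (P : A -> Prop) (c : A) :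
  subsp P -> subsp (fun v => P (c * v)).
Proof.
move=> hP; apply: subsp_comp => //; [exact: mulr0|by move=> ? ?; rewrite mulrDr|].
by move=> a u; rewrite scalerAr.
Qed.

Definition Zj (F : fieldType) (A : algType F) (x y : A) (M j : nat) :=
  spanP (fun g => exists k n, [/\ (k < j)%N, (M < n)%N & g = y ^+ k * x ^+ n]).

Lemma ZjMy (F : fieldType) (M : nat) (A : algType F) (x y : A) j v :
  y * x - x * y = x ^+ M.+1 -> Zj x y M j v -> Zj x y M j.+1 (v * y).
Proof.
move=> rel hv; apply: (hv (fun v => Zj x y M j.+1 (v * y))); first exact/subsp_mulr/spanP_sub.
move=> g [k [n [hk hn ->]]].
rewrite -mulrA (xn_y rel) mulrBr mulrA -exprSr mulrnAr.
apply: spanB.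
  by apply: spanP_gen; exists k.+1, n; split.
apply: spanMn.
by apply: spanP_gen; exists k, (n + M)%N; split => //; [exact: ltnW|rewrite ltn_addr].
Qed.

Lemma yZj (F : fieldType) (M : nat) (A : algType F) (x y : A) j v :
  Zj x y M j v -> Zj x y M j.+1 (y * v).
Proof.
move=> hv; apply: (hv (fun v => Zj x y M j.+1 (y * v))); first exact/subsp_mull/spanP_sub.
move=> g [k [n [hk hn ->]]].
by apply: spanP_gen; exists k.+1, n; split => //; rewrite mulrA -exprS.
Qed.

Lemma ZjMx (F : fieldType) (M : nat) (A : algType F) (x y : A) j m v :
  Zj x y M j v -> Zj x y M j (v * x ^+ m).
Proof.
move=> hv; apply: (hv (fun v => Zj x y M j (v * x ^+ m))); first exact/subsp_mulr/spanP_sub.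
move=> g [k [n [hk hn ->]]].
by apply: spanP_gen; exists k, (n + m)%N; split => //; [rewrite ltn_addr|rewrite -mulrA -exprD].
Qed.

Lemma Zj_mono (F : fieldType) (M : nat) (A : algType F) (x y : A) j v :
  Zj x y M j v -> Zj x y M j.+1 v.
Proof.
move=> hv; apply: (hv (Zj x y M j.+1)); first exact: spanP_sub.
move=> g [k [n [hk hn ->]]].
by apply: spanP_gen; exists k, n; split => //; exact: ltnW.
Qed.

Lemma key1 (F : fieldType) (M : nat) (A : algType F) (x y : A) :
  y * x - x * y = x ^+ M.+1 -> forall j n, (M < n)%N ->
  Zj x y M j (x ^+ n * y ^+ j - y ^+ j * x ^+ n).
Proof.
move=> rel; elim=> [|j IH] n hn.
  by rewrite !expr0 mulr1 mul1r subrr; apply: span0.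
have e : x ^+ n * y ^+ j.+1 - y ^+ j.+1 * x ^+ n =
   (x ^+ n * y ^+ j - y ^+ j * x ^+ n) * y - (y ^+ j * x ^+ (n + M)) *+ n.
  rewrite exprSr mulrA mulrBl -(mulrA (y ^+ j) (x ^+ n)) (xn_y rel) mulrBr (mulrA (y ^+ j) y) mulrnAr.
  by rewrite opprB addrA addrAC addrK.
rewrite e; apply: spanB.
  exact: (ZjMy rel (IH n hn)).
apply: spanMn.
by apply: spanP_gen; exists j, (n + M)%N; split => //; rewrite ltn_addr.
Qed.


Lemma Dmul (F : fieldType) (A : algType F) (x a b : A) :
  (a * b) * x - x * (a * b) = a * (b * x - x * b) + (a * x - x * a) * b.
Proof.
rewrite mulrBr mulrBl !mulrA addrA subrK //.
Qed.

Lemma key2 (F : fieldType) (M : nat) (A : algType F) (x y : A) :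
  y * x - x * y = x ^+ M.+1 -> forall j,
  Zj x y M j ((y ^+ j.+1 * x - x * y ^+ j.+1) - (y ^+ j * x ^+ M.+1) *+ j.+1).
Proof.
move=> rel; elim=> [|j IH].
  by rewrite expr1 expr0 mul1r mulr1n rel subrr; apply: span0.
have e : (y ^+ j.+2 * x - x * y ^+ j.+2) - (y ^+ j.+1 * x ^+ M.+1) *+ j.+2 =
  y * ((y ^+ j.+1 * x - x * y ^+ j.+1) - (y ^+ j * x ^+ M.+1) *+ j.+1) +
  (x ^+ M.+1 * y ^+ j.+1 - y ^+ j.+1 * x ^+ M.+1).
  rewrite [in LHS](exprS y j.+1) Dmul rel [in RHS]mulrBr mulrnAr mulrA -exprS.
  by rewrite [in LHS]mulrSr opprD addrACA.
rewrite e; apply: spanD; first exact: yZj.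
exact: key1.
Qed.

Lemma comm_sub (F : fieldType) (A : algType F) (x : A) : subsp (comm_with x).
Proof.
split.
- by exists 0; rewrite mul0r mulr0 subrr.
- move=> u v [a ->] [b ->]; exists (a + b).
  by rewrite mulrDl mulrDr opprD addrACA.
- move=> c u [a ->]; exists (c *: a).
  by rewrite scalerBr scalerAl scalerAr.
Qed.

Lemma Dxm (F : fieldType) (A : algType F) (x b : A) m :
  (b * x ^+ m) * x - x * (b * x ^+ m) = (b * x - x * b) * x ^+ m.
Proof.
rewrite mulrBl -!mulrA -exprSr exprS; by rewrite (mulrA x b).
Qed.

Lemma claim (F : fieldType) (M : nat) (A : algType F) (x y : A) :
  [pchar F] =i pred0 ->
  y * x - x * y = x ^+ M.+1 -> forall j k n, (k < j)%N -> (M < n)%N ->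
  comm_with x (y ^+ k * x ^+ n).
Proof.
move=> ch rel; elim=> [|j IH] // k n hk hn.
have ZjS : forall v, Zj x y M j v -> comm_with x v.
  move=> v hv; apply: (hv (comm_with x)); first exact: comm_sub.
  by move=> g [k' [n' [hk' hn' ->]]]; apply: IH.
case: (ltngtP k j) => hkj; first exact: IH.
  by move: hk; rewrite ltnS leqNgt hkj.
subst k.
have h1 : comm_with x ((y ^+ j * x ^+ n) *+ j.+1).
  have e : (y ^+ j * x ^+ n) *+ j.+1 =
    ((y ^+ j.+1 * x ^+ (n - M.+1)) * x - x * (y ^+ j.+1 * x ^+ (n - M.+1))) -
    ((y ^+ j.+1 * x - x * y ^+ j.+1) - (y ^+ j * x ^+ M.+1) *+ j.+1) * x ^+ (n - M.+1).
    rewrite Dxm; set D := (y ^+ j.+1 * x - x * y ^+ j.+1); rewrite (mulrBl _ D) opprB addrC subrK.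
    by rewrite mulrnAl -mulrA -exprD subnKC.
  rewrite e; apply: subsp_sub; first exact: comm_sub.
    by eexists.
  by apply: ZjS; apply: ZjMx; apply: key2.
have e : y ^+ j * x ^+ n = (j.+1%:R : F)^-1 *: ((y ^+ j * x ^+ n) *+ j.+1).
  by rewrite -scaler_nat scalerA mulVf ?scale1r // natF_neq0.
by rewrite e; case: (comm_sub x) => _ _ hZ; apply: hZ.
Qed.

Lemma subsp_all (F : fieldType) (A : lmodType F) (T : Type) (P : T -> A -> Prop) :
  (forall z, subsp (P z)) -> subsp (fun v => forall z, P z v).
Proof.
move=> h; split.
- by move=> z; case: (h z).
- by move=> u v hu hv z; case: (h z) => _ hD _; apply: hD.
- by move=> c u hu z; case: (h z) => _ _ hZ; apply: hZ.
Qed.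

Lemma lms_sub (F : fieldType) (A : algType F) (u : A) : subsp (left_mul_set u).
Proof.
split.
- by exists 0; rewrite mulr0.
- by move=> a b [a' ->] [b' ->]; exists (a' + b'); rewrite mulrDr.
- by move=> c a [a' ->]; exists (c *: a'); rewrite scalerAr.
Qed.

Lemma spanZ (F : fieldType) (A : lmodType F) (G : A -> Prop) c u :
  spanP G u -> spanP G (c *: u).
Proof. by case: (spanP_sub G) => _ _ hZ; apply: hZ. Qed.

Theorem lemma3p2 (F : fieldType) (N : nat) (A : algType F) (x y : A) :
  [pchar F] =i pred0 -> (1 <= N)%N -> is_presented_AN N x y ->
  (forall v : A, comm_with x v <-> comm_span v) /\
  (forall v : A, comm_span v <-> left_mul_set (x ^+ N) v).
Proof.
move=> ch N1 [rel gen _].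
case: N N1 rel => [//|M] _ rel.
pose Zall := spanP (fun g : A => exists k n, (M < n)%N /\ g = y ^+ k * x ^+ n).
have ZS : forall v, Zall v -> comm_with x v.
  move=> v hv; apply: (hv (comm_with x)); first exact: comm_sub.
  by move=> g [k [n [hn ->]]]; apply: (claim ch rel (ltnSn k)).
have ZMy : forall v, Zall v -> Zall (v * y).
  move=> v hv; apply: (hv (fun v => Zall (v * y))); first exact/subsp_mulr/spanP_sub.
  move=> g [k [n [hn ->]]].
  rewrite -mulrA (xn_y rel) mulrBr mulrA -exprSr mulrnAr.
  apply: spanB; first by apply: spanP_gen; exists k.+1, n.
  by apply: spanMn; apply: spanP_gen; exists k, (n + M)%N; split => //; rewrite ltn_addr.
have ZMx : forall v, Zall v -> Zall (v * x).
  move=> v hv; apply: (hv (fun v => Zall (v * x))); first exact/subsp_mulr/spanP_sub.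
  move=> g [k [n [hn ->]]].
  by apply: spanP_gen; exists k, n.+1; split; [exact: ltnW|rewrite -mulrA -exprSr].
have IZ : forall a, Zall (x ^+ M.+1 * a).
  have h : forall a z, Zall z -> Zall (z * a).
    move=> a; apply: (all_words (P := fun a => forall z, Zall z -> Zall (z * a)) _ gen).
      split.
      - by move=> z _; rewrite mulr0; apply: span0.
      - by move=> u v hu hv z hz; rewrite mulrDr; apply: spanD; [apply: hu|apply: hv].
      - by move=> c u hu z hz; rewrite -scalerAr; apply: spanZ; apply: hu.
    elim=> [|b w IH] z hz; first by rewrite gen_word_nil mulr1.
    rewrite gen_word_cons mulrA; apply: IH; case: b; [exact: ZMy|exact: ZMx].
  move=> a; apply: h; apply: spanP_gen; exists 0%N, M.+1; split => //.
  by rewrite expr0 mul1r.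
have IS : forall v, left_mul_set (x ^+ M.+1) v -> comm_with x v.
  by move=> v [a ->]; apply: ZS.
pose I := left_mul_set (x ^+ M.+1).
have [I0 ID _] := lms_sub (x ^+ M.+1).
have IR : forall v c, I v -> I (v * c).
  by move=> v c [a ->]; exists (a * c); rewrite mulrA.
have yxN : y * x ^+ M.+1 = x ^+ M.+1 * (y + x ^+ M *+ M.+1).
  by rewrite mulrDr (xn_y rel) mulrnAr -exprD subrK.
have IL : forall c v, I v -> I (c * v).
  move=> c v [a ->]; move: c a.
  apply: (all_words (P := fun c => forall a, I (c * (x ^+ M.+1 * a))) _ gen).
    by apply: subsp_all => a; exact/subsp_mulr/lms_sub.
  elim=> [|b w IH] a; first by rewrite gen_word_nil mul1r; exists a.
  rewrite gen_word_cons -mulrA; have [a' ->] := IH a.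
  case: b.
    by rewrite mulrA yxN -mulrA; eexists.
  by rewrite mulrA -exprS exprSr -mulrA; eexists.
have Igen : forall g, I (g * x - x * g) -> I (g * y - y * g) -> forall b, I (g * b - b * g).
  move=> g hx hy; apply: (all_words (P := fun b => I (g * b - b * g)) _ gen).
    apply: subsp_comp; first exact: lms_sub.
    - by rewrite mulr0 mul0r subrr.
    - by move=> u v; rewrite mulrDr mulrDl opprD addrACA.
    - by move=> c u; rewrite scalerBr -scalerAl -scalerAr.
  elim=> [|b w IH]; first by rewrite gen_word_nil mulr1 mul1r subrr.
  rewrite gen_word_cons; set W := gen_word x y w.
  have e : g * ((if b then y else x) * W) - ((if b then y else x) * W) * g =
    (g * (if b then y else x) - (if b then y else x) * g) * W +
    (if b then y else x) * (g * W - W * g).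
    by rewrite mulrBl mulrBr !mulrA addrA subrK.
  rewrite e; clear e; apply: ID; last exact: IL.
  by apply: IR; case: b.
have Iyx : I (y * x - x * y) by rewrite rel; exists 1; rewrite mulr1.
have Ixy : I (x * y - y * x) by rewrite -opprB rel; exists (-1); rewrite mulrN1.
have Igg : forall g, I (g * g - g * g) by move=> g; rewrite subrr.
have Icomm : forall a b, I (a * b - b * a).
  move=> a; move: a; apply: (all_words (P := fun a => forall b, I (a * b - b * a)) _ gen).
    apply: subsp_all => b; apply: subsp_comp; first exact: lms_sub.
    - by rewrite mulr0 mul0r subrr.
    - by move=> u v; rewrite mulrDr mulrDl opprD addrACA.
    - by move=> c u; rewrite scalerBr -scalerAl -scalerAr.
  elim=> [|h w IH] b; first by rewrite gen_word_nil mulr1 mul1r subrr.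
  rewrite gen_word_cons Dmul; apply: ID; first exact: IL.
  apply: IR; case: h; apply: Igen => //.
have CI : forall v, comm_span v -> I v.
  move=> v [s ->]; elim: s => [|p s IH]; first by rewrite big_nil; exact: I0.
  by rewrite big_cons; apply: ID; [exact: Icomm|exact: IH].
have SC : forall v, comm_with x v -> comm_span v.
  by move=> v [a ->]; exists [:: (a, x)]; rewrite big_cons big_nil addr0.
split=> v; split.
- exact: SC.
- by move=> h; apply: IS; apply: CI.
- exact: CI.
- by move=> h; apply: SC; apply: IS.
Qed.
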